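(* Let $G=(V,E)$ be a simple graph with at least two pendent vertices. Let $u\in V$ with $d_G(u)\ge 3$, let $T$ be a hanging tree of $G$ connected to $u$ (with $|V(T)|\ge 1$), and let $v$ be a pendent vertex of $G$ with $v\notin V(T)$. Let $G'$ be the graph obtained from $G$ by the branch-transformation from $u$ to $v$. Then $\mathrm{irr}_t(G) > \mathrm{irr}_t(G')$.
   Context: For a simple graph $G=(V,E)$ and $w\in V$, $d_G(w)$ denotes the degree of $w$. The total irregularity is $\mathrm{irr}_t(G)=\frac12\sum_{x,y\in V}|d_G(x)-d_G(y)|$, where the sum runs over all ordered pairs $(x,y)\in V\times V$. A pendent vertex is a vertex of degree $1$. An induced subtree $T$ of $G$ is a hanging tree of $G$ connected to a vertex $u\notin V(T)$ if $G$ is obtained from the disjoint union of $T$ and $G-V(T)$ by adding exactly one edge $wu$ with $w\in V(T)$ and $u\in V(G)\setminus V(T)$. Branch-transformation from $u$ to $v$: given $u$, $T$ and $v$ as in the claim, where $wu$ is the unique edge joining $T$ to $G-V(T)$, let $G'$ be the graph obtained from $G$ by deleting the edge $wu$ and adding the edge $wv$. That is, $T$ is detached from $u$ and attached to $v$. *)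

(* Defs.v *)
From HB Require Import structures.
From mathcomp Require Import all_boot all_order all_algebra.
Set Implicit Arguments. Unset Strict Implicit. Unset Printing Implicit Defensive.
Import Order.TTheory GRing.Theory Num.Theory.

Definition simple_graph (V : finType) (e : rel V) : Prop :=
  irreflexive e /\ symmetric e.

Definition deg (V : finType) (e : rel V) (x : V) : nat := #|[set y | e x y]|.

Definition irr_t (V : finType) (e : rel V) : rat :=
  (2%:R)^-1 * \sum_(x : V) \sum_(y : V) `|(deg e x)%:R - (deg e y)%:R : rat|.

Definition pendent (V : finType) (e : rel V) (x : V) : bool := deg e x == 1%N.

Definition induced (V : finType) (e : rel V) (T : {set V}) : rel V :=
  [rel x y | [&& e x y, x \in T & y \in T]].

Definition connected_on (V : finType) (e : rel V) (T : {set V}) : Prop :=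
  forall x y, x \in T -> y \in T -> connect (induced e T) x y.

Definition acyclic_on (V : finType) (e : rel V) (T : {set V}) : Prop :=
  forall c : seq V, (3 <= size c)%N -> uniq c -> {subset c <= T} ->
    ~~ cycle (induced e T) c.

Definition induced_tree (V : finType) (e : rel V) (T : {set V}) : Prop :=
  T != set0 /\ connected_on e T /\ acyclic_on e T.

Definition hanging_tree (V : finType) (e : rel V) (T : {set V}) (w u : V) : Prop :=
  [/\ induced_tree e T, w \in T, u \notin T, e w u &
      forall x y, x \in T -> y \notin T -> e x y -> x = w /\ y = u].

Definition branch_transform (V : finType) (e : rel V) (w u v : V) : rel V :=
  [rel x y | (e x y && ~~ (((x == w) && (y == u)) || ((x == u) && (y == w))))
             || ((x == w) && (y == v)) || ((x == v) && (y == w))].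

(* Main.v *)
Require Import Defs.
From HB Require Import structures.
From mathcomp Require Import all_boot all_order all_algebra lra.
Import Order.TTheory GRing.Theory Num.Theory.
Local Open Scope ring_scope.

Ltac nsplit x := let h := fresh "h" in
  case: (lerP 0 x) => h; [rewrite (ger0_norm h) | rewrite (ltr0_norm h)].

Lemma pw (d k : rat) : 3 <= d -> `|d - 1 - k| + `|2 - k| <= `|d - k| + `|1 - k|.
Proof.
move=> hd.
nsplit (d - 1 - k); nsplit (2 - k); nsplit (d - k); nsplit (1 - k); lra.
Qed.

Lemma sum_uv (V : finType) (F : V -> rat) u v : u != v ->
  \sum_x F x = F u + F v + \sum_(x | (x != u) && (x != v)) F x.
Proof.
move=> uv; rewrite (bigD1 u) //= (bigD1 v) //=.
  by rewrite addrA.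
by rewrite eq_sym.
Qed.

Lemma expand (V : finType) (h : V -> rat) u v : u != v ->
  \sum_x \sum_y `|h x - h y| =
  (`|h u - h u| + `|h u - h v| + \sum_(y | (y != u) && (y != v)) `|h u - h y|)
  + (`|h v - h u| + `|h v - h v| + \sum_(y | (y != u) && (y != v)) `|h v - h y|)
  + (\sum_(x | (x != u) && (x != v)) (`|h x - h u| + `|h x - h v|)
     + \sum_(x | (x != u) && (x != v)) \sum_(y | (y != u) && (y != v)) `|h x - h y|).
Proof.
move=> uv; rewrite (@sum_uv _ _ _ _ uv) !(@sum_uv _ (fun y => `|_ - h y|) _ _ uv).
congr (_ + _); rewrite -big_split; apply: eq_bigr => x _.
by rewrite (@sum_uv _ (fun y => `|_ - h y|) _ _ uv).
Qed.

Lemma key (V : finType) (f g : V -> rat) u v : u != v -> 3 <= f u -> f v = 1 ->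
  g u = f u - 1 -> g v = 2 -> (forall x, x != u -> x != v -> g x = f x) ->
  \sum_x \sum_y `|g x - g y| < \sum_x \sum_y `|f x - f y|.
Proof.
move=> uv hu hv gu gv gx.
rewrite !(@expand _ _ _ _ uv) !subrr normr0.
have ER : \sum_(x | (x != u) && (x != v)) \sum_(y | (y != u) && (y != v)) `|g x - g y|
   = \sum_(x | (x != u) && (x != v)) \sum_(y | (y != u) && (y != v)) `|f x - f y|.
  apply: eq_bigr => x /andP[x1 x2]; apply: eq_bigr => y /andP[y1 y2].
  by rewrite !gx.
have H1 : \sum_(y | (y != u) && (y != v)) `|g u - g y| + \sum_(y | (y != u) && (y != v)) `|g v - g y|
   <= \sum_(y | (y != u) && (y != v)) `|f u - f y| + \sum_(y | (y != u) && (y != v)) `|f v - f y|.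
  rewrite -!big_split; apply: ler_sum => y /andP[y1 y2].
  rewrite gu gv gx // hv; exact: (pw _ (f y) hu).
have H2 : \sum_(x | (x != u) && (x != v)) (`|g x - g u| + `|g x - g v|)
   <= \sum_(x | (x != u) && (x != v)) (`|f x - f u| + `|f x - f v|).
  apply: ler_sum => z /andP[z1 z2].
  rewrite gu gv gx // hv !(distrC (f z)); exact: (pw _ (f z) hu).
have A : `|g u - g v| = `|f u - f v| - 2.
  by rewrite gu gv hv !ger0_norm; lra.
have B : `|g v - g u| = `|f v - f u| - 2.
  by rewrite gu gv hv distrC (distrC 1) !ger0_norm; lra.
rewrite ER A B; lra.
Qed.

Theorem lemma2 (V : finType) (e : rel V) (T : {set V}) (u v w : V) :
  simple_graph e ->
  (2 <= #|[set x | pendent e x]|)%N ->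
  (3 <= deg e u)%N ->
  hanging_tree e T w u ->
  pendent e v -> v \notin T ->
  (irr_t (branch_transform e w u v) < irr_t e)%R.
Proof.
move=> [irr sym] _ du [_ wT unT ewu Hcut] /eqP dv vnT.
have uv : u != v by apply/eqP => E; move: du; rewrite E dv.
have wu : w != u by apply/eqP => E; move: unT; rewrite -E wT.
have wv : w != v by apply/eqP => E; move: vnT; rewrite -E wT.
have nwv : ~~ e w v.
  by apply/negP => H; have [_ E] := Hcut w v wT vnT H; move: uv; rewrite E eqxx.
have euw : e u w by rewrite sym.
have nvw : ~~ e v w by rewrite sym.
set e' := branch_transform e w u v.
have Du : deg e u = (deg e' u).+1.
  rewrite /deg (cardsD1 w [set y | e u y]) inE euw; congr (_.+1).
  apply: eq_card => y; rewrite !inE /e' /branch_transform /= eqxx (negbTE uv) (eq_sym u w) (negbTE wu) /=.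
  by rewrite andbC !orbF.
have Dv : deg e' v = (deg e v).+1.
  rewrite /deg (_ : [set y | e' v y] = w |: [set y | e v y]); last first.
    apply/setP => y; rewrite !inE /e' /branch_transform /= eqxx (eq_sym v w) (negbTE wv) (eq_sym v u) (negbTE uv) /=.
    by rewrite andbT orbF orbC.
  by rewrite (cardsU1 w [set y | e v y]) inE nvw.
have Dx : forall x, x != u -> x != v -> deg e' x = deg e x.
  move=> x xu xv; case: (eqVneq x w) => [->|xw].
    rewrite /deg (_ : [set y | e' w y] = v |: ([set y | e w y] :\ u)); last first.
      apply/setP => y; rewrite !inE /e' /branch_transform /= eqxx (negbTE wu) (negbTE wv) /=.
      by rewrite !orbF orbC andbC.
    by rewrite (cardsU1 v ([set y | e w y] :\ u)) [in RHS](cardsD1 u [set y | e w y]) !inE ewu (negbTE nwv) andbF /=.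
  rewrite /deg; apply: eq_card => y; rewrite !inE /e' /branch_transform /= (negbTE xu) (negbTE xv) (negbTE xw) /=.
  by rewrite !orbF andbT.
rewrite /irr_t ltr_pM2l; last by rewrite invr_gt0 ltr0n.
apply: (@key _ (fun x => (deg e x)%:R) (fun x => (deg e' x)%:R) _ _ uv).
- by rewrite ler_nat.
- by rewrite /= dv.
- by rewrite /= Du -addn1 natrD addrK.
- by rewrite /= Dv dv.
- by move=> x xu xv /=; rewrite Dx.
Qed.
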